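(* Let $I_0\subseteq[n]$ and $\bar J_0\subseteq[\bar d]$ be nonempty. (b) If $\mathcal M=\{M_{I,\bar J}\}$ is an $(n,d)$-matching ensemble, then deleting from every $M_{I,\bar J}$ all vertices outside $I_0\sqcup\bar J_0$ (and removing duplicates) yields exactly the collection $\{M_{I,\bar J}: I\subseteq I_0,\ \bar J\subseteq\bar J_0,\ |I|=|\bar J|\}$, which contains exactly one bijection for each such pair and is a matching ensemble on $I_0\sqcup\bar J_0$. (c) If $\mathcal T$ is an extended $(n,d)$-tope arrangement, then its $(I_0,\bar J_0)$-minor is an extended $(|I_0|,|\bar J_0|)$-tope arrangement on $I_0\sqcup\bar J_0$ (i.e. it consists of pairwise compatible topes $I_0\to\bar J_0$, exactly one of each position $v\in\mathbb Z_{\ge0}^{\bar J_0}$ with coordinate sum $|I_0|$). (d) If $\mathcal T$ is an $(n,d)$-pre-trianguloid, then its $(I_0,\bar J_0)$-minor is a pre-trianguloid on $I_0\sqcup\bar J_0$.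
   Context: Fix positive integers $n,d$; graphs are subgraphs of the complete bipartite graph with left vertices $[n]$ and right vertices $[\bar d]=\{\bar1,\dots,\bar d\}$, identified with edge sets. $LD,RD$ denote the vectors of left/right vertex degrees; $e_{\bar j}$ is a unit vector; lattice points of $k\Delta^{d-1}$ are vectors in $\mathbb Z_{\ge0}^{[\bar d]}$ with sum $k$. Two acyclic graphs are compatible if whenever both contain a perfect matching between the same $I\subseteq[n]$, $\bar J\subseteq[\bar d]$, these matchings coincide. A tope is a map $T:[n]\to[\bar d]$ (graph $\{(i,T(i))\}$), with position $RD(T)$. An extended $(n,d)$-tope arrangement is a collection of pairwise compatible topes $T_v$, one for each lattice point $v$ of $n\Delta^{d-1}$, with $RD(T_v)=v$. An $(n,d)$-pre-trianguloid is a collection of topes $T_v$, one for each lattice point $v$ of $n\Delta^{d-1}$, with $RD(T_v)=v$ and such that whenever $v-e_{\bar j}=v'-e_{\bar j'}$ (for lattice points $v,v'$ of $n\Delta^{d-1}$), $T_{v'}^{-1}(\bar j)\subseteq T_v^{-1}(\bar j)$. Both notions transfer verbatim to any finite left set and right set in place of $[n],[\bar d]$. The $(I_0,\bar J_0)$-minor of a collection of topes: from each tope remove all vertices outside $I_0\sqcup\bar J_0$, discard the resulting graphs in which some vertex of $I_0$ has degree $0$ (i.e. keep only topes $T$ with $T(I_0)\subseteq\bar J_0$, restricted to $I_0$), and remove duplicates. An $(n,d)$-matching ensemble is a collection of bijections $M_{I,\bar J}:I\to\bar J$ (viewed as matching graphs), one for each $I\subseteq[n],\bar J\subseteq[\bar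 d]$ with $|I|=|\bar J|$, such that (Closure) if $I'\subseteq I$, $\bar J'\subseteq\bar J$ and $M_{I,\bar J}$ contains a perfect matching between $I'$ and $\bar J'$ then $M_{I',\bar J'}\subseteq M_{I,\bar J}$; (Left linkage) if $|I|=|\bar J|+1$, the union of $M_{I',\bar J}$ over $I'\subset I$, $|I'|=|\bar J|$, is a spanning tree on $I\sqcup\bar J$ with every vertex of $\bar J$ of degree 2; (Right linkage) if $|I|+1=|\bar J|$, the union of $M_{I,\bar J'}$ over $\bar J'\subset\bar J$, $|\bar J'|=|I|$, is a spanning tree on $I\sqcup\bar J$ with every vertex of $I$ of degree 2. *)

(* Defs.v *)
From mathcomp Require Import all_boot.
Set Implicit Arguments. Unset Strict Implicit. Unset Printing Implicit Defensive.

Section BipartiteGraphs.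
Variables (TL TR : finType).

Definition nbrL (E : {set TL * TR}) (i : TL) : {set TR} := [set j | (i, j) \in E].
Definition nbrR (E : {set TL * TR}) (j : TR) : {set TL} := [set i | (i, j) \in E].

Definition is_pm (I : {set TL}) (J : {set TR}) (G : {set TL * TR}) : Prop :=
  [/\ G \subset setX I J,
      (forall i, i \in I -> #|nbrL G i| = 1) &
      (forall j, j \in J -> #|nbrR G j| = 1)].

Definition contains_pm (G : {set TL * TR}) (I : {set TL}) (J : {set TR}) : Prop :=
  exists M : {set TL * TR}, M \subset G /\ is_pm I J M.

Definition badj (E : {set TL * TR}) : rel (TL + TR) :=
  fun u v => match u, v with
             | inl i, inr j => (i, j) \in E
             | inr j, inl i => (i, j) \in E
             | _, _ => false
             end.

Definition vset (I : {set TL}) (J : {set TR}) : {set TL + TR} :=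
  [set x | match x with inl i => i \in I | inr j => j \in J end].

Definition acyclic (E : {set TL * TR}) : Prop :=
  forall p : seq (TL + TR), uniq p -> 3 <= size p -> ~~ cycle (badj E) p.

Definition spanning_tree (I : {set TL}) (J : {set TR}) (E : {set TL * TR}) : Prop :=
  [/\ E \subset setX I J,
      (forall u v, u \in vset I J -> v \in vset I J -> connect (badj E) u v) &
      acyclic E].

Definition compatible (G H : {set TL * TR}) : Prop :=
  forall (I : {set TL}) (J : {set TR}) (M1 M2 : {set TL * TR}),
    M1 \subset G -> M2 \subset H -> is_pm I J M1 -> is_pm I J M2 -> M1 = M2.

Definition matching_ensemble (L0 : {set TL}) (R0 : {set TR})
    (M : {set TL} -> {set TR} -> {set TL * TR}) : Prop :=
  [/\ (forall (I : {set TL}) (J : {set TR}), I \subset L0 -> J \subset R0 -> #|I| = #|J| -> is_pm I J (M I J)),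
      (forall (I I' : {set TL}) (J J' : {set TR}), I \subset L0 -> J \subset R0 -> #|I| = #|J| ->
          I' \subset I -> J' \subset J -> contains_pm (M I J) I' J' ->
          M I' J' \subset M I J),
      (forall (I : {set TL}) (J : {set TR}), I \subset L0 -> J \subset R0 -> #|I| = #|J| + 1 ->
          let U := \bigcup_(I' in powerset I | #|I'| == #|J|) M I' J in
          spanning_tree I J U /\ (forall j, j \in J -> #|nbrR U j| = 2)) &
      (forall (I : {set TL}) (J : {set TR}), I \subset L0 -> J \subset R0 -> #|I| + 1 = #|J| ->
          let U := \bigcup_(J' in powerset J | #|J'| == #|I|) M I J' in
          spanning_tree I J U /\ (forall i, i \in I -> #|nbrL U i| = 2))].

(* topes L0 -> R0, as graphs {(i, T i)} *)
Definition is_tope (L0 : {set TL}) (R0 : {set TR}) (T : {set TL * TR}) : Prop :=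
  T \subset setX L0 R0 /\ (forall i, i \in L0 -> #|nbrL T i| = 1).

Definition RD (T : {set TL * TR}) : {ffun TR -> nat} := [ffun j => #|nbrR T j|].

Definition lattice_point (R0 : {set TR}) (k : nat) (v : {ffun TR -> nat}) : Prop :=
  (forall j, j \notin R0 -> v j = 0) /\ \sum_(j in R0) v j = k.

Definition one_tope_per_position (L0 : {set TL}) (R0 : {set TR})
    (S : {set {set TL * TR}}) : Prop :=
  (forall T, T \in S -> is_tope L0 R0 T) /\
  (forall v, lattice_point R0 #|L0| v -> exists! T, T \in S /\ RD T = v).

Definition ext_tope_arrangement (L0 : {set TL}) (R0 : {set TR})
    (S : {set {set TL * TR}}) : Prop :=
  one_tope_per_position L0 R0 S /\
  (forall T T', T \in S -> T' \in S -> compatible T T').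

Definition pre_trianguloid (L0 : {set TL}) (R0 : {set TR})
    (S : {set {set TL * TR}}) : Prop :=
  one_tope_per_position L0 R0 S /\
  (* whenever RD T - e_j = RD T' - e_j', i.e. RD T + e_j' = RD T' + e_j *)
  (forall T T' j j', T \in S -> T' \in S -> j \in R0 -> j' \in R0 ->
     (forall k, RD T k + (k == j') = RD T' k + (k == j)) ->
     nbrR T' j \subset nbrR T j).

Definition restrict (I0 : {set TL}) (J0 : {set TR}) (G : {set TL * TR}) : {set TL * TR} :=
  [set e in G | (e.1 \in I0) && (e.2 \in J0)].

Definition minor (I0 : {set TL}) (J0 : {set TR}) (S : {set {set TL * TR}})
    : {set {set TL * TR}} :=
  [set restrict I0 J0 T | T in S &
     [forall i in I0, #|nbrL (restrict I0 J0 T) i| != 0]].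

End BipartiteGraphs.

(* Main.v *)
Require Import Defs.
From mathcomp Require Import all_boot.
Set Implicit Arguments. Unset Strict Implicit. Unset Printing Implicit Defensive.


Lemma tope_sub (TL TR : finType) (L0 : {set TL}) (R0 : {set TR}) T i j :
  is_tope L0 R0 T -> (i,j) \in T -> (i \in L0) && (j \in R0).
Proof. by case=> /subsetP sT _ /sT; rewrite inE. Qed.

Lemma tope_ex (TL TR : finType) (L0 : {set TL}) (R0 : {set TR}) T i :
  is_tope L0 R0 T -> i \in L0 -> exists j, (i,j) \in T.
Proof.
case=> _ h /h /eqP /cards1P [j hj]; exists j.
have : j \in nbrL T i by rewrite hj set11.
by rewrite inE.
Qed.

Lemma tope_uniq (TL TR : finType) (L0 : {set TL}) (R0 : {set TR}) T i j j' :
  is_tope L0 R0 T -> (i,j) \in T -> (i,j') \in T -> j = j'.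
Proof.
move=> tT h1 h2; have /andP[iL _] := tope_sub tT h1.
case: tT => _ /(_ i iL) /eqP /cards1P [k hk].
have : j \in nbrL T i by rewrite inE.
have : j' \in nbrL T i by rewrite inE.
by rewrite hk !inE => /eqP -> /eqP ->.
Qed.

Definition tval (TL TR : finType) (j0 : TR) (T : {set TL * TR}) (i : TL) : TR :=
  odflt j0 [pick j | (i, j) \in T].

Lemma tvalP (TL TR : finType) (j0 : TR) (L0 : {set TL}) (R0 : {set TR}) T i :
  is_tope L0 R0 T -> i \in L0 -> (i, tval j0 T i) \in T.
Proof.
move=> tT iL; rewrite /tval; case: pickP => [j //|h].
by have [j hj] := tope_ex tT iL; move: (h j); rewrite hj.
Qed.

Lemma tvalE (TL TR : finType) (j0 : TR) (L0 : {set TL}) (R0 : {set TR}) T i j :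
  is_tope L0 R0 T -> (i, j) \in T -> tval j0 T i = j.
Proof.
move=> tT h; have /andP[iL _] := tope_sub tT h.
by apply: (tope_uniq tT _ h); apply: tvalP tT iL.
Qed.

Lemma RDE (TL TR : finType) (T : {set TL * TR}) j : RD T j = #|nbrR T j|.
Proof. by rewrite ffunE. Qed.

Definition vplus (TR : finType) (v : {ffun TR -> nat}) (t : TR) : {ffun TR -> nat} :=
  [ffun k => v k + (k == t)].

Lemma vplusE (TR : finType) (v : {ffun TR -> nat}) t k : vplus v t k = v k + (k == t).
Proof. by rewrite ffunE. Qed.

Lemma sum_setT (TR : finType) (f : TR -> nat) : \sum_(j in [set: TR]) f j = \sum_j f j.
Proof. by apply: eq_bigl => j; rewrite inE. Qed.

Lemma lp_vplus (TR : finType) (v : {ffun TR -> nat}) k t :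
  lattice_point [set: TR] k v -> lattice_point [set: TR] k.+1 (vplus v t).
Proof.
case=> _ hs; split=> [j|]; first by rewrite inE.
rewrite sum_setT; under eq_bigr do rewrite vplusE.
rewrite big_split /= -sum_setT hs (bigD1 t) //= eqxx big1 ?addn0 ?addn1 //.
by move=> j /negbTE ->.
Qed.

Lemma card_nbrR_sum (TL TR : finType) (T : {set TL * TR}) j :
  #|nbrR T j| = \sum_i ((i, j) \in T : nat).
Proof.
rewrite -sum1_card big_mkcond /=; apply: eq_bigr => i _; rewrite inE.
by case: ((i,j) \in T).
Qed.

Lemma tope_lp (TL TR : finType) (L0 : {set TL}) T :
  is_tope L0 [set: TR] T -> lattice_point [set: TR] #|L0| (RD T).
Proof.
move=> tT; split=> [j|]; first by rewrite inE.
rewrite sum_setT; under eq_bigr do rewrite RDE card_nbrR_sum.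
rewrite exchange_big /= -sum1_card [RHS]big_mkcond /=; apply: eq_bigr => i _.
have -> : \sum_j ((i, j) \in T : nat) = #|nbrL T i|.
  by rewrite -sum1_card [RHS]big_mkcond /=; apply: eq_bigr => j _; rewrite inE; case: ((i,j) \in T).
case: (boolP (i \in L0)) => iL; first by case: tT => _ /(_ i iL) ->.
apply/eqP; rewrite cards_eq0; apply/eqP/setP => j; rewrite !inE.
by apply/negP => /(tope_sub tT); rewrite (negbTE iL).
Qed.


Definition posT (TL TR : finType) (S : {set {set TL * TR}}) (w : {ffun TR -> nat}) :=
  odflt set0 [pick T in S | RD T == w].

Lemma posT_spec (TL TR : finType) (L0 : {set TL}) S w :
  one_tope_per_position L0 [set: TR] S -> lattice_point [set: TR] #|L0| w ->
  posT S w \in S /\ RD (posT S w) = w.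
Proof.
case=> _ h /h [T [[TS RT] _]]; rewrite /posT; case: pickP => [T' /andP[-> /eqP] //|].
by move/(_ T); rewrite TS RT eqxx.
Qed.

Lemma posT_uniq (TL TR : finType) (L0 : {set TL}) S T :
  one_tope_per_position L0 [set: TR] S -> T \in S -> posT S (RD T) = T.
Proof.
move=> H TS; have lp := tope_lp (H.1 _ TS).
have [P1 P2] := posT_spec H lp.
case: H => _ /(_ _ lp) [T0 [_ u]].
by rewrite -(u _ (conj P1 P2)) -(u _ (conj TS erefl)).
Qed.

Lemma opp_uniq (TL TR : finType) (L0 : {set TL}) S T T' :
  one_tope_per_position L0 [set: TR] S -> T \in S -> T' \in S -> RD T = RD T' -> T = T'.
Proof. by move=> H TS T'S e; rewrite -(posT_uniq H TS) -(posT_uniq H T'S) e. Qed.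

Definition LB (TL TR : finType) (S : {set {set TL * TR}}) :=
  forall v t s T T', T \in S -> T' \in S -> RD T = vplus v t -> RD T' = vplus v s ->
    nbrR T s \subset nbrR T' s.


Lemma card_graph (TL TR : finType) (Y : {set TL}) (f : TL -> TR) :
  #|[set (z, f z) | z in Y]| = #|Y|.
Proof. by apply: card_imset => x y [->]. Qed.

Lemma Ulem (TL TR : finType) (j0 : TR) (L0 : {set TL}) i0 S v a b Ta Tb :
  one_tope_per_position L0 [set: TR] S -> LB S -> i0 \in L0 ->
  lattice_point [set: TR] #|L0 :\ i0| v ->
  Ta \in S -> Tb \in S -> RD Ta = vplus v a -> RD Tb = vplus v b ->
  (i0,a) \in Ta -> (i0,b) \in Tb ->
  forall y c, y != i0 -> (y,c) \in Ta -> (y,c) \in Tb.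
Proof.
move=> H lb i0L lpv TaS TbS RTa RTb i0a i0b y c yi0 hyc.
apply/contraT => hnb.
have cL0 : #|L0| = #|L0 :\ i0|.+1 by rewrite (cardsD1 i0 L0) i0L.
have tTa := H.1 _ TaS; have tTb := H.1 _ TbS.
pose fa := tval j0 Ta; pose fb := tval j0 Tb.
have yL : y \in L0 by have /andP[] := tope_sub tTa hyc.
pose Y := [set z in L0 | (z != i0) && (fa z != fb z)].
have faP z : z \in L0 -> (z, fa z) \in Ta by move=> zL; apply: tvalP tTa zL.
have fbP z : z \in L0 -> (z, fb z) \in Tb by move=> zL; apply: tvalP tTb zL.
have fyc : fa y = c by apply: tvalE tTa hyc.
have yY : y \in Y.
  rewrite !inE yL yi0 fyc /=; apply/eqP => e; move: (fbP y yL); rewrite -e.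
  by rewrite (negbTE hnb).
pose C := fa @: Y.
pose Tt s := posT S (vplus v s).
have lpt s : lattice_point [set: TR] #|L0| (vplus v s) by rewrite cL0; apply: lp_vplus.
have TtS s : Tt s \in S by have [] := posT_spec H (lpt s).
have RTt s : RD (Tt s) = vplus v s by have [] := posT_spec H (lpt s).
have tTt s := H.1 _ (TtS s).
have cTt s t : #|nbrR (Tt t) s| = v s + (s == t) by rewrite -RDE RTt vplusE.
have cTa s : #|nbrR Ta s| = v s + (s == a) by rewrite -RDE RTa vplusE.
have cTb s : #|nbrR Tb s| = v s + (s == b) by rewrite -RDE RTb vplusE.
have LBa z s : (z,s) \in Ta -> (z,s) \in Tt s.
  move=> h; have := lb _ _ _ _ _ TaS (TtS s) RTa (RTt s).
  by move/subsetP/(_ z); rewrite !inE; apply.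
have LBb z s : (z,s) \in Tb -> (z,s) \in Tt s.
  move=> h; have := lb _ _ _ _ _ TbS (TtS s) RTb (RTt s).
  by move/subsetP/(_ z); rewrite !inE; apply.
have YL z : z \in Y -> z \in L0 by rewrite inE => /andP[].
have f1 z : z \in Y -> fb z \in C.
  move=> zY; have zL := YL _ zY; apply/contraT => hC.
  have nC z' : z' \in Y -> fa z' != fb z.
    by move=> z'Y; apply: contra hC => /eqP <-; apply: imset_f.
  have zi0 : z != i0 by move: zY; rewrite inE => /and3P[].
  have fzne : fa z != fb z by move: zY; rewrite inE => /and3P[].
  case: (eqVneq (fb z) a) => [ea|nea].
    have := lb _ _ _ _ _ TbS TaS RTb RTa; move/subsetP/(_ z).
    rewrite !inE -ea (fbP z zL) => /(_ isT) h.
    by move: (tvalE j0 tTa h); rewrite -/fa => /eqP; rewrite (negbTE fzne).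
  have sub : z |: nbrR Ta (fb z) \subset nbrR Tb (fb z).
    apply/subsetP => x; rewrite !inE => /orP[/eqP ->|hx]; first exact: fbP.
    have xL : x \in L0 by have /andP[] := tope_sub tTa hx.
    have fax : fa x = fb z by apply: tvalE tTa hx.
    have xi0 : x != i0.
      apply/eqP => e; move: hx; rewrite e => hx.
      by move: (tope_uniq tTa hx i0a) => e'; rewrite e' eqxx in nea.
    have xnY : x \notin Y by apply/negP => /nC; rewrite fax eqxx.
    move: xnY; rewrite !inE xL xi0 /= negbK => /eqP e.
    by move: (fbP x xL); rewrite -e fax.
  have znA : z \notin nbrR Ta (fb z).
    by rewrite inE; apply/negP => h; move: (tvalE j0 tTa h) fzne; rewrite -/fa => ->; rewrite eqxx.
  move: (subset_leq_card sub); rewrite cardsU1 znA cTa cTb (negbTE nea) addn0.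
  case: (eqVneq (fb z) b) => [eb|neb]; last by rewrite /= addn0 add1n ltnn.
  move=> _; have sub2 : i0 |: (z |: nbrR Ta (fb z)) \subset nbrR Tb (fb z).
    apply/subsetP => x; rewrite in_setU1 => /orP[/eqP ->|]; last by apply/subsetP.
    by rewrite inE eb.
  have i0n : i0 \notin z |: nbrR Ta (fb z).
    rewrite !inE negb_or eq_sym zi0 /=; apply/negP => h.
    by move: (tope_uniq tTa h i0a) => e'; rewrite e' eqxx in nea.
  move: (subset_leq_card sub2); rewrite !cardsU1 i0n znA cTa cTb (negbTE nea) ?eb ?eqxx /=.
  by rewrite addn0 addn1 add1n ltnn.
pose c0 := fa y.
have c0C : c0 \in C by apply: imset_f.
pose dr s := odflt i0 [pick x in nbrR (Tt s) s :\: nbrR (Tt c0) s].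
have hdr s z : s != c0 -> z \in nbrR (Tt s) s :\: nbrR (Tt c0) s -> z = dr s.
  move=> sc0 hz.
  have sb : nbrR (Tt c0) s \subset nbrR (Tt s) s by apply: lb (TtS c0) (TtS s) (RTt c0) (RTt s).
  have c1 : #|nbrR (Tt s) s :\: nbrR (Tt c0) s| = 1.
    by rewrite cardsD (setIidPr sb) !cTt eqxx (negbTE sc0) addn0 addKn.
  move/eqP/cards1P: c1 => [x hx]; move: hz; rewrite hx inE => /eqP ->.
  rewrite /dr; case: pickP => [x' |/(_ x)]; last by rewrite hx set11.
  by rewrite hx inE => /eqP.
pose E2 := [set (z, fa z) | z in Y] :|: [set (z, fb z) | z in Y].
have cE2 : #|E2| = #|Y| + #|Y|.
  have := cardsUI [set (z, fa z) | z in Y] [set (z, fb z) | z in Y]; rewrite !card_graph => <-.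
  rewrite -[LHS]addn0; congr (_ + _); apply/esym/eqP; rewrite cards_eq0.
  apply/eqP/setP => e; rewrite !inE; apply/negP => /andP[/imsetP[z zY ->] /imsetP[z' _ [e1 e2]]].
  by move: zY; rewrite -e1 in e2; rewrite inE e2 eqxx !andbF.
have sub : E2 \subset [set (z, tval j0 (Tt c0) z) | z in Y] :|: [set (dr s, s) | s in C :\ c0].
  apply/subsetP => e; rewrite inE => he.
  have [z zY [s [es hs sC]]] : exists2 z, z \in Y & exists s, [/\ e = (z, s), (z,s) \in Tt s & s \in C].
    case/orP: he => /imsetP[z zY ->]; exists z => //; [exists (fa z) | exists (fb z)];
      split => //; [apply: LBa; apply: faP | exact: imset_f | apply: LBb; apply: fbP | exact: f1];
      exact: YL.
  rewrite es inE; case: (eqVneq (tval j0 (Tt c0) z) s) => [et|net].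
    by rewrite -et imset_f.
  have sc0 : s != c0 by apply/eqP => es0; move: hs net; rewrite es0 => hs; rewrite (tvalE j0 (tTt c0) hs) eqxx.
  apply/orP; right; apply/imsetP; exists s; first by rewrite !inE sc0.
  rewrite -(hdr s z sc0) // !inE hs andbT; apply: contra net => h; exact/eqP/(tvalE j0 (tTt c0) h).
move: (subset_leq_card sub); rewrite cE2.
move/leq_trans/(_ (leq_card_setU _ _)); rewrite card_graph.
move/leq_trans/(_ (leq_add (leqnn _) (leq_imset_card _ _))).
rewrite leq_add2l => h.
have h2 : #|C| <= #|Y| := leq_imset_card fa Y.
move: h2; rewrite (cardsD1 c0 C) c0C add1n => h2.
by move: (leq_trans h2 h); rewrite ltnn.
Qed.


Lemma in_restrict (TL TR : finType) (I0 : {set TL}) (J0 : {set TR}) T i j :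
  ((i,j) \in restrict I0 J0 T) = [&& (i,j) \in T, i \in I0 & j \in J0].
Proof. by rewrite inE. Qed.

Lemma restr_tope (TL TR : finType) (L0 I0 : {set TL}) T :
  is_tope L0 [set: TR] T -> I0 \subset L0 -> is_tope I0 [set: TR] (restrict I0 [set: TR] T).
Proof.
move=> tT sI; split.
  by apply/subsetP => -[i j]; rewrite in_restrict !inE => /and3P[_ -> _].
move=> i iI; have iL := subsetP sI _ iI; have h := tT.2 i iL.
rewrite -h; apply: eq_card => j; by rewrite !inE iI /= ?andbT.
Qed.

Lemma minorE (TL TR : finType) (L0 I0 : {set TL}) (S : {set {set TL * TR}}) :
  (forall T, T \in S -> is_tope L0 [set: TR] T) -> I0 \subset L0 ->
  minor I0 [set: TR] S = restrict I0 [set: TR] @: S.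
Proof.
move=> hS sI; apply/setP => A; apply/imsetP/imsetP => -[T]; last first.
  move=> TS ->; exists T => //; rewrite inE TS /=; apply/forall_inP => i iI.
  have [j hj] := tope_ex (hS _ TS) (subsetP sI _ iI).
  by rewrite cards_eq0; apply/set0Pn; exists j; rewrite !inE hj iI.
by rewrite inE => /andP[TS _] ->; exists T.
Qed.

Lemma vplus_inj (TR : finType) (u u' : {ffun TR -> nat}) b : vplus u b = vplus u' b -> u = u'.
Proof. by move=> e; apply/ffunP => k; move/ffunP/(_ k): e; rewrite !vplusE => /addIn. Qed.

Lemma RD_restr (TL TR : finType) (L0 : {set TL}) i0 b T :
  is_tope L0 [set: TR] T -> (i0,b) \in T ->
  RD T = vplus (RD (restrict (L0 :\ i0) [set: TR] T)) b.
Proof.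
move=> tT hb; apply/ffunP => k; rewrite vplusE !RDE.
have e : nbrR T k = (if k == b then [set i0] else set0) :|: nbrR (restrict (L0 :\ i0) [set: TR] T) k.
  apply/setP => i; rewrite !inE; case: (eqVneq i i0) => [->|ni] /=.
    case: (eqVneq k b) => [->|nk]; rewrite ?inE ?hb ?eqxx /=.
      by [].
    rewrite andbF; apply/negP => h; move: (tope_uniq tT h hb) nk => ->.
    by rewrite eqxx.
  have -> : (i \in (if k == b then [set i0] else set0)) = false.
    by case: (k == b); rewrite ?inE // (negbTE ni).
  rewrite andbT /=; case h: ((i,k) \in T) => //=.
  by have /andP[-> _] := tope_sub tT h.
rewrite e cardsU; case: (eqVneq k b) => [->|nk].
  have -> : [set i0] :&: nbrR (restrict (L0 :\ i0) [set: TR] T) b = set0.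
    by apply/setP => i; rewrite !inE; apply/negP => /and4P[/eqP -> _]; rewrite eqxx.
  by rewrite cards0 subn0 cards1 addnC.
by rewrite set0I cards0 subn0 add0n addn0.
Qed.



Lemma restr_eq (TL TR : finType) (j0 : TR) (L0 : {set TL}) i0 S v a b Ta Tb :
  one_tope_per_position L0 [set: TR] S -> LB S -> i0 \in L0 ->
  lattice_point [set: TR] #|L0 :\ i0| v ->
  Ta \in S -> Tb \in S -> RD Ta = vplus v a -> RD Tb = vplus v b ->
  (i0,a) \in Ta -> (i0,b) \in Tb ->
  restrict (L0 :\ i0) [set: TR] Ta = restrict (L0 :\ i0) [set: TR] Tb.
Proof.
move=> H lb i0L lpv TaS TbS RTa RTb ha hb; apply/setP => -[y c]; rewrite !in_restrict.
case: (boolP (y \in L0 :\ i0)) => yL; rewrite ?andbF // ?in_setT /= ?andbT.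
have yi0 : y != i0 by move: yL; rewrite !inE => /andP[].
apply/idP/idP => h.
  exact: (Ulem j0 H lb i0L lpv TaS TbS RTa RTb ha hb yi0 h).
exact: (Ulem j0 H lb i0L lpv TbS TaS RTb RTa hb ha yi0 h).
Qed.

Lemma remove_otp (TL TR : finType) (j0 : TR) (L0 : {set TL}) i0 S :
  one_tope_per_position L0 [set: TR] S -> LB S -> i0 \in L0 ->
  one_tope_per_position (L0 :\ i0) [set: TR] (minor (L0 :\ i0) [set: TR] S).
Proof.
move=> H lb i0L; rewrite (minorE H.1 (subD1set L0 i0)); split.
  by move=> A /imsetP[T TS ->]; apply: restr_tope (H.1 _ TS) (subD1set L0 i0).
move=> v lpv.
have cL0 : #|L0| = #|L0 :\ i0|.+1 by rewrite (cardsD1 i0 L0) i0L.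
have lpt s : lattice_point [set: TR] #|L0| (vplus v s) by rewrite cL0; apply: lp_vplus.
pose T := posT S (vplus v j0).
have [TS RT] := posT_spec H (lpt j0).
pose b := tval j0 T i0.
have hb : (i0, b) \in T by apply: tvalP (H.1 _ TS) i0L.
pose T' := posT S (vplus v b).
have [T'S RT'] := posT_spec H (lpt b).
have hb' : (i0, b) \in T'.
  by have := lb _ _ _ _ _ TS T'S RT RT'; move/subsetP/(_ i0); rewrite !inE; apply.
exists (restrict (L0 :\ i0) [set: TR] T'); split.
  split; first exact: imset_f.
  by apply: (@vplus_inj _ _ _ b); rewrite -RT' (RD_restr (H.1 _ T'S) hb').
move=> A [/imsetP[T'' T''S ->] RA].
pose a := tval j0 T'' i0.
have ha : (i0, a) \in T'' by apply: tvalP (H.1 _ T''S) i0L.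
have RT'' : RD T'' = vplus v a by rewrite (RD_restr (H.1 _ T''S) ha) RA.
exact: (restr_eq j0 H lb i0L lpv T'S T''S RT' RT'' hb' ha).
Qed.


Lemma pre_LB (TL TR : finType) (L0 : {set TL}) (S : {set {set TL * TR}}) :
  pre_trianguloid L0 [set: TR] S -> LB S.
Proof.
move=> [_ ax] v t s T T' TS T'S RT RT'.
apply: (ax T' T s t T'S TS); rewrite ?in_setT // => k.
by rewrite RT RT' !vplusE addnAC.
Qed.

Lemma remove_pre (TL TR : finType) (j0 : TR) (L0 : {set TL}) i0 S :
  pre_trianguloid L0 [set: TR] S -> i0 \in L0 ->
  pre_trianguloid (L0 :\ i0) [set: TR] (minor (L0 :\ i0) [set: TR] S).
Proof.
move=> Hp i0L; have H := Hp.1; have lb := pre_LB Hp.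
have H' := remove_otp j0 H lb i0L.
split=> // A A' j j' hA hA' _ _ hk.
have cL0 : #|L0| = #|L0 :\ i0|.+1 by rewrite (cardsD1 i0 L0) i0L.
have tA := H'.1 _ hA; have tA' := H'.1 _ hA'.
pose u := RD A; pose u' := RD A'.
have lpu : lattice_point [set: TR] #|L0 :\ i0| u := tope_lp tA.
have lpu' : lattice_point [set: TR] #|L0 :\ i0| u' := tope_lp tA'.
have lpt x s : lattice_point [set: TR] #|L0 :\ i0| x -> lattice_point [set: TR] #|L0| (vplus x s).
  by move=> lx; rewrite cL0; apply: lp_vplus.
have ew : vplus u j' = vplus u' j by apply/ffunP => k; rewrite !vplusE hk.
pose W := posT S (vplus u j').
have [WS RW] := posT_spec H (lpt _ j' lpu).
pose r := tval j0 W i0.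
have hr : (i0, r) \in W by apply: tvalP (H.1 _ WS) i0L.
pose P := posT S (vplus u r); pose Q := posT S (vplus u' r).
have [PS RP] := posT_spec H (lpt _ r lpu).
have [QS RQ] := posT_spec H (lpt _ r lpu').
have hP : (i0, r) \in P.
  by have := lb _ _ _ _ _ WS PS RW RP; move/subsetP/(_ i0); rewrite !inE; apply.
have hQ : (i0, r) \in Q.
  by have := lb _ _ _ _ _ WS QS (etrans RW ew) RQ; move/subsetP/(_ i0); rewrite !inE; apply.
have sub := subD1set L0 i0.
have mE := minorE H.1 sub.
have eA : A = restrict (L0 :\ i0) [set: TR] P.
  apply: (opp_uniq H' hA); first by rewrite mE imset_f.
  by apply: (@vplus_inj _ _ _ r); rewrite -(RD_restr (H.1 _ PS) hP) RP.
have eA' : A' = restrict (L0 :\ i0) [set: TR] Q.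
  apply: (opp_uniq H' hA'); first by rewrite mE imset_f.
  by apply: (@vplus_inj _ _ _ r); rewrite -(RD_restr (H.1 _ QS) hQ) RQ.
have ax : nbrR Q j \subset nbrR P j.
  apply: (Hp.2 P Q j j' PS QS); rewrite ?in_setT // => k.
  by rewrite RP RQ !vplusE addnAC hk addnAC.
rewrite eA eA'; apply/subsetP => i; rewrite !inE => /and3P[hi hi1 hi2]; rewrite hi1 /= ?andbT.
by move/subsetP/(_ i): ax; rewrite !inE; apply.
Qed.


Lemma closed_sub (X : finType) (P : {set X}) (g : X -> X) :
  P != set0 -> {in P, forall x, g x \in P} -> exists C : {set X}, [/\ C \subset P, C != set0 & g @: C = C].
Proof.
move=> Pn gP.
pose Q (C : {set X}) := [&& C \subset P, C != set0 & g @: C \subset C].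
have QP : Q P.
  by rewrite /Q subxx Pn /=; apply/subsetP => x /imsetP[y yP ->]; apply: gP.
case: (arg_minnP (fun C : {set X} => #|C|) QP) => C /and3P[sCP Cn gC] minC.
exists C; split => //.
have QD : Q (g @: C).
  rewrite /Q imset_eq0 Cn (subset_trans gC sCP) /=; exact: imsetS.
have := minC _ QD => le; apply/eqP; rewrite eqEcard gC le //.
Qed.

Lemma pm_graph (X Y : finType) (C : {set X}) (h : X -> Y) :
  {in C &, injective h} -> is_pm C (h @: C) [set (i, h i) | i in C].
Proof.
move=> hi; split.
- by apply/subsetP => e /imsetP[i iC ->]; rewrite inE /= iC imset_f.
- move=> i iC; apply/eqP/cards1P; exists (h i); apply/setP => j; rewrite !inE.
  apply/imsetP/eqP => [[i' _ [-> ->]] //|->]; by exists i.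
- move=> j /imsetP[i iC ->]; apply/eqP/cards1P; exists i; apply/setP => i'; rewrite !inE.
  apply/imsetP/eqP => [[i'' i''C [-> e]]|->]; last by exists i.
  by apply: hi => //; rewrite -e.
Qed.

Lemma ext_LB (TL TR : finType) (j0 : TR) (L0 : {set TL}) (S : {set {set TL * TR}}) :
  ext_tope_arrangement L0 [set: TR] S -> LB S.
Proof.
move=> [H comp] v t s T T' TS T'S RT RT'.
apply/subsetP => y; rewrite !inE => hy; apply/contraT => hny.
have tT := H.1 _ TS; have tT' := H.1 _ T'S.
pose f := tval j0 T; pose f' := tval j0 T'.
have fP i : i \in L0 -> (i, f i) \in T by move=> iL; apply: tvalP tT iL.
have f'P i : i \in L0 -> (i, f' i) \in T' by move=> iL; apply: tvalP tT' iL.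
have cT c : #|nbrR T c| = v c + (c == t) by rewrite -RDE RT vplusE.
have cT' c : #|nbrR T' c| = v c + (c == s) by rewrite -RDE RT' vplusE.
pose P := [set i in L0 | f i != f' i].
have yL : y \in L0 by have /andP[] := tope_sub tT hy.
have fy : f y = s by apply: tvalE tT hy.
have yP : y \in P.
  rewrite !inE yL fy /=; apply/eqP => e; move: (f'P y yL); rewrite -e.
  by rewrite (negbTE hny).
have PL i : i \in P -> i \in L0 by rewrite inE => /andP[].
have cond i : i \in P -> [exists i', (i' \in P) && (f i' == f' i)].
  move=> iP; have iL := PL _ iP; apply/contraT; rewrite negb_exists => /forallP hn.
  case: (eqVneq (f' i) s) => [es|nes].
    by move: (hn y); rewrite yP fy es eqxx.
  have sub : i |: nbrR T (f' i) \subset nbrR T' (f' i).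
    apply/subsetP => x; rewrite !inE => /orP[/eqP ->|hx]; first exact: f'P.
    have xL : x \in L0 by have /andP[] := tope_sub tT hx.
    have fx : f x = f' i by apply: tvalE tT hx.
    have : x \notin P by apply/negP => xP; move: (hn x); rewrite xP fx eqxx.
    rewrite inE xL /= negbK => /eqP e; by move: (f'P x xL); rewrite -e fx.
  have inn : i \notin nbrR T (f' i).
    rewrite inE; apply/negP => h; have := tvalE j0 tT h; rewrite -/f => e.
    by move: iP; rewrite inE e eqxx andbF.
  move: (subset_leq_card sub); rewrite cardsU1 inn cT cT' (negbTE nes) addn0 /=.
  by rewrite add1n ltnNge leq_addr.
pose hh c := [pick i' in P | f i' == c].
pose g i := odflt i (hh (f' i)).
have gP i : i \in P -> hh (f' i) = Some (g i) /\ g i \in P /\ f (g i) = f' i.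
  move=> iP; rewrite /g /hh; case: pickP => [i' /andP[i'P /eqP e] //|hn].
  by move: (cond i iP) => /existsP[i' hi']; move: (hn i'); rewrite hi'.
have Pn : P != set0 by apply/set0Pn; exists y.
have [C [sCP Cn gC]] := closed_sub Pn (fun i iP => (gP i iP).2.1).
have CP i : i \in C -> i \in P by move=> iC; apply: (subsetP sCP).
have gsame i1 i2 : i1 \in P -> i2 \in P -> f' i1 = f' i2 -> g i1 = g i2.
  move=> h1 h2 e; have := (gP _ h1).1; rewrite e (gP _ h2).1; by case.
have ginj : {in C &, injective g}.
  by apply/imset_injP; rewrite gC.
have Cg z : z \in C -> exists2 z', z' \in C & z = g z'.
  by move=> zC; move: zC; rewrite -{1}gC => /imsetP[z' z'C ->]; exists z'.
have finj : {in C &, injective f}.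
  move=> z1 z2 z1C z2C.
  have [z1' z1'C ->] := Cg _ z1C; have [z2' z2'C ->] := Cg _ z2C.
  rewrite (gP _ (CP _ z1'C)).2.2 (gP _ (CP _ z2'C)).2.2 => e.
  exact: gsame (CP _ z1'C) (CP _ z2'C) e.
have f'inj : {in C &, injective f'}.
  move=> i1 i2 i1C i2C e; apply: ginj => //.
  exact: gsame (CP _ i1C) (CP _ i2C) e.
have eJ : f' @: C = f @: C.
  apply/setP => c; apply/imsetP/imsetP => [[i iC ->]|[z zC ->]].
    exists (g i); first by rewrite -gC imset_f.
    by rewrite (gP _ (CP _ iC)).2.2.
  have [z' z'C ->] := Cg _ zC; exists z' => //.
  by rewrite (gP _ (CP _ z'C)).2.2.
have s1 : [set (i, f i) | i in C] \subset T.
  by apply/subsetP => e /imsetP[i iC ->]; apply: fP; apply: PL; apply: CP.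
have s2 : [set (i, f' i) | i in C] \subset T'.
  by apply/subsetP => e /imsetP[i iC ->]; apply: f'P; apply: PL; apply: CP.
have pm1 := pm_graph finj.
have pm2 := pm_graph f'inj; rewrite eJ in pm2.
have e := comp _ _ TS T'S _ _ _ _ s1 s2 pm1 pm2.
have [z zC] := set0Pn _ Cn.
have : (z, f z) \in [set (i, f i) | i in C] by apply: imset_f.
rewrite e => /imsetP[z' _ [ez efz]].
by move: (CP _ zC); rewrite inE efz -ez eqxx andbF.
Qed.


Lemma remove_ext (TL TR : finType) (j0 : TR) (L0 : {set TL}) i0 S :
  ext_tope_arrangement L0 [set: TR] S -> i0 \in L0 ->
  ext_tope_arrangement (L0 :\ i0) [set: TR] (minor (L0 :\ i0) [set: TR] S).
Proof.
move=> He i0L; split; first exact (remove_otp j0 He.1 (ext_LB j0 He) i0L).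
rewrite (minorE He.1.1 (subD1set L0 i0)) => A A' /imsetP[T TS ->] /imsetP[T' T'S ->].
move=> I J M1 M2 s1 s2; apply: (He.2 _ _ TS T'S).
  by apply: (subset_trans s1); apply/subsetP => e; rewrite inE => /andP[].
by apply: (subset_trans s2); apply/subsetP => e; rewrite inE => /andP[].
Qed.

Lemma restr_restr (TL TR : finType) (I0 L1 : {set TL}) (J0 : {set TR}) T :
  I0 \subset L1 -> restrict I0 J0 (restrict L1 [set: TR] T) = restrict I0 J0 T.
Proof.
move=> s; apply/setP => -[i j]; rewrite !in_restrict in_setT andbT.
case: (boolP (i \in I0)) => iI; rewrite ?andbF // (subsetP s _ iI).
by rewrite andbT.
Qed.

Lemma minor_comp (TL TR : finType) (L0 L1 I0 : {set TL}) (J0 : {set TR}) (S : {set {set TL * TR}}) :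
  (forall T, T \in S -> is_tope L0 [set: TR] T) -> I0 \subset L1 -> L1 \subset L0 ->
  minor I0 J0 (minor L1 [set: TR] S) = minor I0 J0 S.
Proof.
move=> hS s1 s2; rewrite (minorE hS s2); apply/setP => A.
apply/imsetP/imsetP => -[T].
  rewrite inE => /andP[/imsetP[T' T'S ->]]; rewrite restr_restr // => c ->.
  by exists T' => //; rewrite inE T'S.
rewrite inE => /andP[TS c] ->; exists (restrict L1 [set: TR] T); last by rewrite restr_restr.
by rewrite inE imset_f //= restr_restr.
Qed.

Lemma minor_id (TL TR : finType) (L0 : {set TL}) (S : {set {set TL * TR}}) :
  (forall T, T \in S -> is_tope L0 [set: TR] T) -> minor L0 [set: TR] S = S.
Proof.
move=> hS; rewrite (minorE hS (subxx L0)); apply/setP => A; apply/imsetP/idP.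
  case=> T TS ->; rewrite (_ : restrict _ _ T = T) //.
  apply/setP => -[i j]; rewrite in_restrict in_setT andbT.
  by case h: ((i,j) \in T) => //=; have /andP[] := tope_sub (hS _ TS) h.
move=> AS; exists A => //; apply/setP => -[i j]; rewrite in_restrict in_setT andbT.
by case h: ((i,j) \in A) => //=; have /andP[] := tope_sub (hS _ AS) h.
Qed.

Lemma left_induct (TL TR : finType) (Q : {set TL} -> {set {set TL * TR}} -> Prop) :
  (forall L0 S i0, Q L0 S -> i0 \in L0 -> Q (L0 :\ i0) (minor (L0 :\ i0) [set: TR] S)) ->
  (forall L0 S, Q L0 S -> forall T, T \in S -> is_tope L0 [set: TR] T) ->
  forall (I0 L0 : {set TL}) S, I0 \subset L0 -> Q L0 S -> Q I0 (minor I0 [set: TR] S).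
Proof.
move=> step tp I0 L0 S; move eK : #|L0 :\: I0| => k.
elim: k L0 S eK => [|k IH] L0 S eK sI HQ.
  have eL : L0 = I0.
    apply/eqP; rewrite eqEsubset sI andbT; apply/subsetP => x xL; apply/contraT => xI.
    by move: eK; rewrite (cardsD1 x) !inE xI xL.
  by subst L0; rewrite minor_id //; apply: tp.
have : L0 :\: I0 != set0 by rewrite -card_gt0 eK.
case/set0Pn => i0; rewrite inE => /andP[i0I i0L].
have HQ' := step _ _ _ HQ i0L.
have sI' : I0 \subset L0 :\ i0.
  apply/subsetP => x xI; rewrite !inE (subsetP sI _ xI) andbT.
  by apply: contraNneq i0I => <-.
have eK' : #|(L0 :\ i0) :\: I0| = k.
  move: eK; rewrite (cardsD1 i0 (L0 :\: I0)) !inE i0I i0L add1n => -[<-].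
  by apply: eq_card => x; rewrite !inE; case: (x == i0); rewrite ?andbF //= andbC.
have := IH _ _ eK' sI' HQ'.
by rewrite (minor_comp [set: TR] (tp _ _ HQ)) // subD1set.
Qed.


Lemma restr_id (TL TR : finType) (I0 : {set TL}) (J0 : {set TR}) (T : {set TL * TR}) :
  T \subset setX I0 J0 -> restrict I0 J0 T = T.
Proof.
move=> s; apply/setP => -[i j]; rewrite in_restrict.
by case h: ((i,j) \in T) => //=; move/subsetP/(_ _ h): s; rewrite inE.
Qed.

Lemma minorJ (TL TR : finType) (I0 : {set TL}) (J0 : {set TR}) (S : {set {set TL * TR}}) :
  (forall T, T \in S -> is_tope I0 [set: TR] T) ->
  minor I0 J0 S = [set T in S | T \subset setX I0 J0].
Proof.
move=> hS; apply/setP => A; rewrite inE; apply/imsetP/andP.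
  case=> T; rewrite inE => /andP[TS /forall_inP c] ->.
  have sT : T \subset setX I0 J0.
    apply/subsetP => -[i j] h; have /andP[iI _] := tope_sub (hS _ TS) h.
    move: (c i iI); rewrite cards_eq0 => /set0Pn[j' hj']; move: hj'.
    rewrite !inE => /and3P[h' _ jJ]; rewrite iI /=.
    by rewrite (tope_uniq (hS _ TS) h h').
  by rewrite restr_id.
case=> AS sA; exists A; last by rewrite restr_id.
rewrite inE AS /=; apply/forall_inP => i iI.
have [j hj] := tope_ex (hS _ AS) iI.
rewrite cards_eq0; apply/set0Pn; exists j; rewrite !inE hj iI /=.
by move/subsetP/(_ _ hj): sA; rewrite inE => /andP[].
Qed.

Lemma J_otp (TL TR : finType) (I0 : {set TL}) (J0 : {set TR}) (S : {set {set TL * TR}}) :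
  one_tope_per_position I0 [set: TR] S -> one_tope_per_position I0 J0 (minor I0 J0 S).
Proof.
move=> H; rewrite (minorJ J0 H.1); split.
  move=> T; rewrite inE => /andP[TS sT]; split => // i iI; exact: (H.1 _ TS).2.
move=> v [hz hs].
have lp : lattice_point [set: TR] #|I0| v.
  split=> [j|]; first by rewrite inE.
  rewrite -hs sum_setT [RHS]big_mkcond /=; apply: eq_bigr => j _.
  by case: (boolP (j \in J0)) => // /hz.
have [TS RT] := posT_spec H lp.
exists (posT S v); split.
  split => //; rewrite inE TS /=; apply/subsetP => -[i j] h.
  have /andP[iI _] := tope_sub (H.1 _ TS) h; rewrite inE iI /=.
  apply/contraT => /hz; rewrite -RT RDE => /eqP; rewrite cards_eq0 => /eqP/setP/(_ i).
  by rewrite !inE h.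
move=> A []; rewrite inE => /andP[AS _] RA.
by symmetry; apply: (opp_uniq H AS TS); rewrite RA RT.
Qed.

Lemma J_ext (TL TR : finType) (I0 : {set TL}) (J0 : {set TR}) (S : {set {set TL * TR}}) :
  ext_tope_arrangement I0 [set: TR] S -> ext_tope_arrangement I0 J0 (minor I0 J0 S).
Proof.
move=> [H c]; split; first exact: J_otp.
rewrite (minorJ J0 H.1) => T T'; rewrite !inE => /andP[TS _] /andP[T'S _]; exact: c.
Qed.

Lemma J_pre (TL TR : finType) (I0 : {set TL}) (J0 : {set TR}) (S : {set {set TL * TR}}) :
  pre_trianguloid I0 [set: TR] S -> pre_trianguloid I0 J0 (minor I0 J0 S).
Proof.
move=> [H ax]; split; first exact: J_otp.
rewrite (minorJ J0 H.1) => T T' j j'; rewrite !inE => /andP[TS _] /andP[T'S _] _ _.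
exact: ax.
Qed.

Lemma main_c (TL TR : finType) (j0 : TR) (I0 : {set TL}) (J0 : {set TR}) S :
  ext_tope_arrangement [set: TL] [set: TR] S -> ext_tope_arrangement I0 J0 (minor I0 J0 S).
Proof.
move=> He.
have h1 := @left_induct _ _ (fun L S => ext_tope_arrangement L [set: TR] S)
  (fun L S i0 h i0L => remove_ext j0 h i0L) (fun L S h => h.1.1) I0 _ S (subsetT I0) He.
rewrite -(minor_comp J0 He.1.1 (subxx I0) (subsetT I0)); exact: J_ext.
Qed.

Lemma main_d (TL TR : finType) (j0 : TR) (I0 : {set TL}) (J0 : {set TR}) S :
  pre_trianguloid [set: TL] [set: TR] S -> pre_trianguloid I0 J0 (minor I0 J0 S).
Proof.
move=> He.
have h1 := @left_induct _ _ (fun L S => pre_trianguloid L [set: TR] S)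
  (fun L S i0 h i0L => remove_pre j0 h i0L) (fun L S h => h.1.1) I0 _ S (subsetT I0) He.
rewrite -(minor_comp J0 He.1.1 (subxx I0) (subsetT I0)); exact: J_pre.
Qed.


Lemma pm_detL (TL TR : finType) (I : {set TL}) (J : {set TR}) G :
  is_pm I J G -> I = [set i | [exists j, (i,j) \in G]].
Proof.
case=> s hI _; apply/setP => i; rewrite inE; apply/idP/existsP.
  move/hI/eqP/cards1P => [j hj]; exists j.
  have : j \in nbrL G i by rewrite hj set11.
  by rewrite inE.
by case=> j /(subsetP s); rewrite inE => /andP[].
Qed.

Lemma pm_detR (TL TR : finType) (I : {set TL}) (J : {set TR}) G :
  is_pm I J G -> J = [set j | [exists i, (i,j) \in G]].
Proof.
case=> s _ hJ; apply/setP => j; rewrite inE; apply/idP/existsP.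
  move/hJ/eqP/cards1P => [i hi]; exists i.
  have : i \in nbrR G j by rewrite hi set11.
  by rewrite inE.
by case=> i /(subsetP s); rewrite inE => /andP[].
Qed.

Lemma pm_funL (TL TR : finType) (I : {set TL}) (J : {set TR}) G i j j' :
  is_pm I J G -> (i,j) \in G -> (i,j') \in G -> j = j'.
Proof.
case=> s hI _ h1 h2; have : i \in I by move/subsetP/(_ _ h1): s; rewrite inE => /andP[].
move/hI/eqP/cards1P => [k hk].
have : j \in nbrL G i by rewrite inE.
have : j' \in nbrL G i by rewrite inE.
by rewrite hk !inE => /eqP -> /eqP ->.
Qed.

Lemma pm_funR (TL TR : finType) (I : {set TL}) (J : {set TR}) G i i' j :
  is_pm I J G -> (i,j) \in G -> (i',j) \in G -> i = i'.
Proof.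
case=> s _ hJ h1 h2; have : j \in J by move/subsetP/(_ _ h1): s; rewrite inE => /andP[].
move/hJ/eqP/cards1P => [k hk].
have : i \in nbrR G j by rewrite inE.
have : i' \in nbrR G j by rewrite inE.
by rewrite hk !inE => /eqP -> /eqP ->.
Qed.

Lemma pm_card (TL TR : finType) (I : {set TL}) (J : {set TR}) G :
  is_pm I J G -> #|I| = #|J|.
Proof.
move=> pm.
have e1 : #|fst @: G| = #|G|.
  apply/eqP/imset_injP => -[i j] [i' j'] h1 h2 /= e; subst i'.
  by rewrite (pm_funL pm h1 h2).
have e2 : #|snd @: G| = #|G|.
  apply/eqP/imset_injP => -[i j] [i' j'] h1 h2 /= e; subst j'.
  by rewrite (pm_funR pm h1 h2).
have f1 : fst @: G = I.
  rewrite [RHS](pm_detL pm); apply/setP => i; rewrite inE; apply/imsetP/existsP.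
    by case=> -[i' j] h ->; exists j.
  by case=> j h; exists (i,j).
have f2 : snd @: G = J.
  rewrite [RHS](pm_detR pm); apply/setP => j; rewrite inE; apply/imsetP/existsP.
    by case=> -[i j'] h ->; exists i.
  by case=> i h; exists (i,j).
by rewrite -f1 -f2 e1 e2.
Qed.

Lemma pm_sub_eq (TL TR : finType) (I I' : {set TL}) (J J' : {set TR}) (G M1 M2 : {set TL * TR}) :
  is_pm I J G -> M1 \subset G -> M2 \subset G -> is_pm I' J' M1 -> is_pm I' J' M2 -> M1 = M2.
Proof.
move=> pG.
have key (A B : {set TL * TR}) : A \subset G -> B \subset G -> is_pm I' J' A -> is_pm I' J' B ->
    A \subset B.
  move=> sA sB pA pB; apply/subsetP => -[i j] h.
  have : i \in I' by rewrite (pm_detL pA) inE; apply/existsP; exists j.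
  rewrite (pm_detL pB) inE => /existsP[j' h'].
  by rewrite (pm_funL pG (subsetP sA _ h) (subsetP sB _ h')).
move=> s1 s2 p1 p2; apply/eqP; rewrite eqEsubset; apply/andP; split; exact: key.
Qed.

Lemma sub_card1 (T : finType) (A B : {set T}) : A \subset B -> #|B| = 1 -> A != set0 -> #|A| = 1.
Proof.
move=> s cB An; apply/eqP; rewrite eqn_leq; apply/andP; split.
  by rewrite -cB subset_leq_card.
by rewrite card_gt0.
Qed.

Lemma part_b (n d : nat) (I0 : {set 'I_n}) (J0 : {set 'I_d})
  (M : {set 'I_n} -> {set 'I_d} -> {set 'I_n * 'I_d}) :
     matching_ensemble [set: 'I_n] [set: 'I_d] M ->
     [/\ [set restrict I0 J0 (M IJ.1 IJ.2) | IJ in [set IJ : {set 'I_n} * {set 'I_d}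
            | #|IJ.1| == #|IJ.2|]]
         = [set M IJ.1 IJ.2 | IJ in [set IJ : {set 'I_n} * {set 'I_d}
            | (IJ.1 \subset I0) && (IJ.2 \subset J0) && (#|IJ.1| == #|IJ.2|)]],
         (forall (I : {set 'I_n}) (J : {set 'I_d}), I \subset I0 -> J \subset J0 -> #|I| = #|J| ->
            exists! G, G \in [set M IJ.1 IJ.2 | IJ in [set IJ : {set 'I_n} * {set 'I_d}
               | (IJ.1 \subset I0) && (IJ.2 \subset J0) && (#|IJ.1| == #|IJ.2|)]]
              /\ is_pm I J G) &
         matching_ensemble I0 J0 M].
Proof.
move=> HM; have [h1 h2 h3 h4] := HM.
have pmM (I : {set 'I_n}) (J : {set 'I_d}) : #|I| = #|J| -> is_pm I J (M I J).
  by move=> e; apply: h1 => //; apply: subsetT.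
split.
- apply/setP => G; apply/imsetP/imsetP.
    case=> -[I J]; rewrite inE /= => /eqP eIJ ->.
    have pG := pmM _ _ eIJ; have [pGs pGL pGR] := pG.
    pose R := restrict I0 J0 (M I J).
    pose I' := [set i | [exists j, (i,j) \in R]].
    pose J' := [set j | [exists i, (i,j) \in R]].
    have sR : R \subset M I J by apply/subsetP => e; rewrite inE => /andP[].
    have pR : is_pm I' J' R.
      split.
      + apply/subsetP => -[i j] h; rewrite !inE.
        by apply/andP; split; apply/existsP; [exists j | exists i].
      + move=> i; rewrite inE => /existsP[j h].
        have iI : i \in I by move/subsetP/(_ _ (subsetP sR _ h)): pGs; rewrite inE => /andP[].
        apply: (sub_card1 _ (pGL _ iI)).
          by apply/subsetP => k; rewrite !inE => /andP[].
        by apply/set0Pn; exists j; rewrite inE.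
      + move=> j; rewrite inE => /existsP[i h].
        have jJ : j \in J by move/subsetP/(_ _ (subsetP sR _ h)): pGs; rewrite inE => /andP[].
        apply: (sub_card1 _ (pGR _ jJ)).
          by apply/subsetP => k; rewrite !inE => /andP[].
        by apply/set0Pn; exists i; rewrite inE.
    have sI' : I' \subset I.
      apply/subsetP => i; rewrite inE => /existsP[j /(subsetP sR) h].
      by move/subsetP/(_ _ h): pGs; rewrite inE => /andP[].
    have sJ' : J' \subset J.
      apply/subsetP => j; rewrite inE => /existsP[i /(subsetP sR) h].
      by move/subsetP/(_ _ h): pGs; rewrite inE => /andP[].
    have sI0 : I' \subset I0.
      by apply/subsetP => i; rewrite inE => /existsP[j]; rewrite inE => /and3P[].
    have sJ0 : J' \subset J0.
      by apply/subsetP => j; rewrite inE => /existsP[i]; rewrite inE => /and3P[].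
    have cIJ' := pm_card pR.
    have cl : M I' J' \subset M I J.
      apply: h2 => //; try apply: subsetT.
      by exists R.
    exists (I', J'); first by rewrite inE /= sI0 sJ0 cIJ' eqxx.
    by apply: (pm_sub_eq pG sR cl pR); apply: pmM.
  case=> -[I J]; rewrite inE /= => /andP[/andP[sI sJ] /eqP eIJ] ->.
  exists (I, J); first by rewrite inE /= eIJ.
  have [pGs _ _] := pmM _ _ eIJ.
  rewrite restr_id //; apply: (subset_trans pGs).
  by apply/subsetP => -[i j]; rewrite !inE => /andP[/(subsetP sI) -> /(subsetP sJ) ->].
- move=> I J sI sJ eIJ; exists (M I J); split.
    by split; [apply/imsetP; exists (I, J) => //; rewrite inE /= sI sJ eIJ eqxx | apply: pmM].
  move=> G [/imsetP[[I' J'] ] ]; rewrite inE /= => /andP[_ /eqP e'] -> pG'.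
  have p' := pmM _ _ e'.
  by rewrite (pm_detL pG') (pm_detR pG') -(pm_detL p') -(pm_detR p').
- split.
  + by move=> I J _ _ e; apply: pmM.
  + by move=> I I' J J' _ _ e; apply: h2 => //; apply: subsetT.
  + by move=> I J _ _ e; apply: h3 => //; apply: subsetT.
  + by move=> I J _ _ e; apply: h4 => //; apply: subsetT.
Qed.

Theorem mainTheorem6 (n d : nat) (I0 : {set 'I_n}) (J0 : {set 'I_d}) :
  0 < n -> 0 < d -> I0 != set0 -> J0 != set0 ->
  (* (b) *)
  (forall M : {set 'I_n} -> {set 'I_d} -> {set 'I_n * 'I_d},
     matching_ensemble [set: 'I_n] [set: 'I_d] M ->
     [/\ [set restrict I0 J0 (M IJ.1 IJ.2) | IJ in [set IJ : {set 'I_n} * {set 'I_d}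
            | #|IJ.1| == #|IJ.2|]]
         = [set M IJ.1 IJ.2 | IJ in [set IJ : {set 'I_n} * {set 'I_d}
            | (IJ.1 \subset I0) && (IJ.2 \subset J0) && (#|IJ.1| == #|IJ.2|)]],
         (forall (I : {set 'I_n}) (J : {set 'I_d}), I \subset I0 -> J \subset J0 -> #|I| = #|J| ->
            exists! G, G \in [set M IJ.1 IJ.2 | IJ in [set IJ : {set 'I_n} * {set 'I_d}
               | (IJ.1 \subset I0) && (IJ.2 \subset J0) && (#|IJ.1| == #|IJ.2|)]]
              /\ is_pm I J G) &
         matching_ensemble I0 J0 M]) /\
  (* (c) *)
  (forall S : {set {set 'I_n * 'I_d}},
     ext_tope_arrangement [set: 'I_n] [set: 'I_d] S ->
     ext_tope_arrangement I0 J0 (minor I0 J0 S)) /\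
  (* (d) *)
  (forall S : {set {set 'I_n * 'I_d}},
     pre_trianguloid [set: 'I_n] [set: 'I_d] S ->
     pre_trianguloid I0 J0 (minor I0 J0 S)).
Proof.
move=> hn hd _ _; have j0 : 'I_d := Ordinal hd.
split; first exact: part_b.
split=> S HS; [exact: main_c j0 _ _ _ HS | exact: main_d j0 _ _ _ HS].
Qed.
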